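(* Let $k$ be a positive integer, $a_1>a_2>\cdots>a_n$ real numbers in $[a,b]$, and $w_1,\dots,w_n$ real weights such that $\sum_{i=1}^n w_ia_i^j=0$ for all integers $0\le j<k$ and \[ \sum_{i=1}^j w_i(a_i-a_{j+1})(a_i-a_{j+2})\cdots(a_i-a_{j+k-1})\ge 0\quad\text{for all }1\le j\le n-k \] (the product has $k-1$ factors; it is empty, i.e. equal to $1$, when $k=1$). Then $\sum_{i=1}^n w_if(a_i)\ge 0$ for every $k$ times differentiable $f:[a,b]\to\mathbb{R}$ with $f^{(k)}\ge 0$. *)

(* Defs.v *)
From Stdlib Require Import Reals Lra Lia.
Open Scope R_scope.

(* sumR f n = f 1 + f 2 + ... + f n  (1-based, empty sum = 0) *)
Fixpoint sumR (f : nat -> R) (n : nat) : R :=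
  match n with
  | O => 0
  | S m => sumR f m + f (S m)
  end.

Fixpoint prodR (f : nat -> R) (n : nat) : R :=
  match n with
  | O => 1
  | S m => prodR f m * f (S m)
  end.

(* g has derivative l at x relative to the interval [a,b]
   (one-sided at the endpoints). *)
Definition deriv_within (a b : R) (g : R -> R) (x l : R) : Prop :=
  forall eps : R, 0 < eps ->
    exists delta : R, 0 < delta /\
      forall y : R, a <= y <= b -> y <> x -> Rabs (y - x) < delta ->
        Rabs ((g y - g x) / (y - x) - l) < eps.

(* D 0, D 1, ..., D k are the successive derivatives of D 0 on [a,b]:
   D 0 is k times differentiable on [a,b] with j-th derivative D j. *)
Definition kth_derivs_on (a b : R) (k : nat) (D : nat -> R -> R) : Prop :=
  forall j : nat, (j < k)%nat ->
    forall x : R, a <= x <= b -> deriv_within a b (D j) x (D (S j) x).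

(* Main.v *)
Require Import Defs.
From Stdlib Require Import Reals Lra Lia Arith.
From Coquelicot Require Import Coquelicot.
Open Scope R_scope.

Lemma sumR_ext f g n : (forall i, (1<=i<=n)%nat -> f i = g i) -> sumR f n = sumR g n.
Proof. induction n; intros H; simpl; auto. rewrite IHn by (intros; apply H; lia). rewrite H by lia. reflexivity. Qed.

Lemma sumR_plus f g n : sumR (fun i => f i + g i) n = sumR f n + sumR g n.
Proof. induction n; simpl; [lra|rewrite IHn; lra]. Qed.

Lemma sumR_minus f g n : sumR (fun i => f i - g i) n = sumR f n - sumR g n.
Proof. induction n; simpl; [lra|rewrite IHn; lra]. Qed.

Lemma sumR_scal c f n : sumR (fun i => c * f i) n = c * sumR f n.
Proof. induction n; simpl; [lra|rewrite IHn; lra]. Qed.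

Lemma sumR_zero f n : (forall i, (1<=i<=n)%nat -> f i = 0) -> sumR f n = 0.
Proof. intros H. rewrite (sumR_ext f (fun _ => 0)) by auto. induction n; simpl; [lra|]. rewrite IHn by (intros; apply H; lia). lra. Qed.

Lemma sumR_shift f n : sumR f (S n) = f 1%nat + sumR (fun i => f (S i)) n.
Proof. induction n. simpl; lra. change (sumR f (S (S n))) with (sumR f (S n) + f (S (S n))).
rewrite IHn. simpl. lra. Qed.

Lemma sumR_extend f m n : (m<=n)%nat -> (forall i, (m < i <= n)%nat -> f i = 0) -> sumR f n = sumR f m.
Proof. induction n; intros Hm H. replace m with 0%nat by lia. reflexivity.
destruct (Nat.eq_dec m (S n)). subst; reflexivity.
simpl. rewrite IHn by (try lia; intros; apply H; lia). rewrite H by lia. lra. Qed.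

Lemma prodR_zero f K m : (1<=m<=K)%nat -> f m = 0 -> prodR f K = 0.
Proof. induction K; intros Hm H. lia. simpl. destruct (Nat.eq_dec m (S K)). subst. rewrite H. ring.
rewrite IHK by (auto; lia). ring. Qed.

Lemma prodR_pos f K : (forall m, (1<=m<=K)%nat -> 0 < f m) -> 0 < prodR f K.
Proof. induction K; intros H; simpl. lra. apply Rmult_lt_0_compat. apply IHK; intros; apply H; lia. apply H; lia. Qed.

Lemma prodR_pow x K : prodR (fun _ => x) K = x ^ K.
Proof. induction K; simpl; [lra|rewrite IHK; ring]. Qed.

Lemma poly_moment (x w : nat -> R) n K : (forall j, (j <= K)%nat -> sumR (fun i => w i * x i ^ j) n = 0) ->
  forall c : nat -> R, sumR (fun i => w i * prodR (fun m => x i - c m) K) n = 0.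
Proof. revert w. induction K; intros w H c.
- rewrite <- (H 0%nat) by lia. apply sumR_ext; intros; simpl; ring.
- simpl.
  rewrite (sumR_ext _ (fun i => (w i * x i) * prodR (fun m => x i - c m) K - c (S K) * (w i * prodR (fun m => x i - c m) K))) by (intros; ring).
  rewrite sumR_minus, sumR_scal. rewrite IHK, IHK. ring.
  + intros; apply H; lia.
  + intros j Hj. rewrite <- (H (S j)) by lia. apply sumR_ext; intros; simpl; ring.
Qed.

Lemma chain_dec (x : nat -> R) n : (forall i, (1<=i<n)%nat -> x (S i) < x i) -> forall i j, (1<=i)%nat -> (i<j)%nat -> (j<=n)%nat -> x j < x i.
Proof. intros H i j Hi. induction j; intros Hij Hj. lia. destruct (Nat.eq_dec i j). subst. apply H; lia.
apply Rlt_trans with (x j). apply H; lia. apply IHj; lia. Qed.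

Lemma vand (x w : nat -> R) n : (forall i j, (1<=i)%nat -> (i<j)%nat -> (j<=n)%nat -> x j < x i) ->
  (forall j, (j < n)%nat -> sumR (fun i => w i * x i ^ j) n = 0) -> forall i, (1<=i<=n)%nat -> w i = 0.
Proof. revert w. induction n; intros w Hd Hm. lia.
assert (Hw : forall i, (1<=i<=n)%nat -> w i = 0).
{ intros i Hi. assert (H0 : w i * (x i - x (S n)) = 0).
  { apply (IHn (fun i => w i * (x i - x (S n)))). intros; apply Hd; lia.
    intros j Hj. transitivity (sumR (fun i => w i * (x i - x (S n)) * x i ^ j) (S n)).
    simpl. ring.
    rewrite (sumR_ext _ (fun i => w i * x i ^ (S j) - x (S n) * (w i * x i ^ j))) by (intros; simpl; ring).
    rewrite sumR_minus, sumR_scal, !Hm by lia. ring. lia. }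
  apply Rmult_integral in H0. destruct H0; auto. assert (x (S n) < x i) by (apply Hd; lia). lra. }
intros i Hi. destruct (Nat.eq_dec i (S n)); [|apply Hw; lia]. subst.
specialize (Hm 0%nat ltac:(lia)). simpl in Hm. rewrite sumR_zero in Hm by (intros; rewrite Hw by lia; ring). lra.
Qed.

Lemma exist_e (x : nat -> R) k : (forall i j, (1<=i)%nat -> (i<j)%nat -> (j<=S k)%nat -> x j < x i) ->
  exists e : nat -> R, e 1%nat = 1 /\ forall j, (j<k)%nat -> sumR (fun i => e i * x i ^ j) (S k) = 0.
Proof. revert x. induction k; intros x Hd.
- exists (fun _ => 1). split; [reflexivity|intros; lia].
- destruct (IHk x) as [eA [HA1 HA]]. intros; apply Hd; lia.
  destruct (IHk (fun i => x (S i))) as [eB [HB1 HB]]. intros; apply Hd; lia.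
  set (MA := sumR (fun i => eA i * x i ^ k) (S k)).
  set (MB := sumR (fun i => eB i * x (S i) ^ k) (S k)).
  assert (HMB : MB <> 0).
  { intro HM. assert (eB 1%nat = 0). apply (vand (fun i => x (S i)) eB (S k)). intros; apply Hd; lia.
    intros j Hj. destruct (Nat.eq_dec j k). subst; exact HM. apply HB; lia. lia. lra. }
  exists (fun i => (if (i <=? S k)%nat then eA i else 0) - MA / MB *
     (match i with O => 0 | S i' => match i' with O => 0 | _ => eB i' end end)).
  split. simpl. rewrite HA1. ring.
  intros j Hj.
  rewrite (sumR_ext _ (fun i => (if (i <=? S k)%nat then eA i else 0) * x i ^ j - MA / MB *
     ((match i with O => 0 | S i' => match i' with O => 0 | _ => eB i' end end) * x i ^ j))) by (intros; ring).
  rewrite sumR_minus, sumR_scal.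
  rewrite (sumR_extend _ (S k)); [| lia | intros i Hi; destruct (Nat.leb_spec i (S k)); [lia|ring]].
  rewrite (sumR_ext _ (fun i => eA i * x i ^ j)) by (intros i Hi; destruct (Nat.leb_spec i (S k)); [auto|lia]).
  rewrite (sumR_shift (fun i => (match i with O => 0 | S i' => match i' with O => 0 | _ => eB i' end end) * x i ^ j)).
  rewrite (sumR_ext (fun i => _ * x (S i) ^ j) (fun i => eB i * x (S i) ^ j)) by (intros i Hi; destruct i; [lia|reflexivity]).
  destruct (Nat.eq_dec j k).
  + subst. fold MA. fold MB. field. auto.
  + rewrite HA, HB by lia. ring.
Qed.

Lemma dw_const p q C x : deriv_within p q (fun _ => C) x 0.
Proof. intros eps He. exists 1. split. lra. intros y _ Hne _.
replace ((C - C) / (y - x) - 0) with 0 by (field; lra). rewrite Rabs_R0. lra. Qed.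

Lemma dw_plus p q g h x l1 l2 : deriv_within p q g x l1 -> deriv_within p q h x l2 ->
  deriv_within p q (fun y => g y + h y) x (l1 + l2).
Proof. intros H1 H2 eps He. destruct (H1 (eps/2)) as [d1 [Hd1 P1]]. lra.
destruct (H2 (eps/2)) as [d2 [Hd2 P2]]. lra.
exists (Rmin d1 d2). split. apply Rmin_pos; auto. intros y Hy Hne Hlt.
specialize (P1 y Hy Hne (Rlt_le_trans _ _ _ Hlt (Rmin_l _ _))).
specialize (P2 y Hy Hne (Rlt_le_trans _ _ _ Hlt (Rmin_r _ _))).
replace ((g y + h y - (g x + h x)) / (y - x) - (l1 + l2)) with
  (((g y - g x) / (y - x) - l1) + ((h y - h x) / (y - x) - l2)) by (field; lra).
eapply Rle_lt_trans. apply Rabs_triang. lra. Qed.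

Lemma dw_scal p q c g x l : deriv_within p q g x l -> deriv_within p q (fun y => c * g y) x (c * l).
Proof. intros H eps He. assert (Hc : 0 < Rabs c + 1) by (pose proof (Rabs_pos c); lra).
destruct (H (eps/(Rabs c + 1))) as [d [Hd P]]. apply Rdiv_lt_0_compat; lra.
exists d. split; auto. intros y Hy Hne Hlt. specialize (P y Hy Hne Hlt).
replace ((c * g y - c * g x) / (y - x) - c * l) with (c * ((g y - g x) / (y - x) - l)) by (field; lra).
rewrite Rabs_mult. set (r := Rabs ((g y - g x) / (y - x) - l)) in *.
assert (0 <= r) by apply Rabs_pos. pose proof (Rabs_pos c).
apply Rle_lt_trans with ((Rabs c + 1) * r). nra.
replace eps with ((Rabs c + 1) * (eps / (Rabs c + 1))) by (field; lra).
apply Rmult_lt_compat_l; lra. Qed.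

Lemma dw_sum p q x n (F : nat -> R -> R) (F' : nat -> R) :
  (forall i, (1<=i<=n)%nat -> deriv_within p q (F i) x (F' i)) ->
  deriv_within p q (fun y => sumR (fun i => F i y) n) x (sumR F' n).
Proof. induction n; intros H. exact (dw_const p q 0 x). apply (dw_plus p q _ (F (S n))).  apply IHn; intros; apply H; lia.
apply H; lia. Qed.

Lemma dw_comp p q a b g c0 d t l : (forall s, p <= s <= q -> a <= c0 + s * d <= b) ->
  p <= t <= q -> deriv_within a b g (c0 + t * d) l ->
  deriv_within p q (fun s => g (c0 + s * d)) t (d * l).
Proof. intros Hin Ht H eps He. destruct (Req_dec d 0) as [Hd0|Hd0].
- subst. exists 1. split. lra. intros y _ Hne _. rewrite !Rmult_0_r.
  replace ((g (c0 + 0) - g (c0 + 0)) / (y - t) - 0 * l) with 0 by (field; lra). rewrite Rabs_R0; lra.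
- assert (Hda : 0 < Rabs d) by (apply Rabs_pos_lt; auto).
  destruct (H (eps / Rabs d)) as [d1 [Hd1 P]]. apply Rdiv_lt_0_compat; lra.
  exists (d1 / Rabs d). split. apply Rdiv_lt_0_compat; lra.
  intros y Hy Hne Hlt. specialize (P (c0 + y * d) (Hin y Hy)).
  assert (Hne' : c0 + y * d <> c0 + t * d). { intro E. apply Hne. apply Rmult_eq_reg_r with d; auto. lra. }
  specialize (P Hne').
  replace (c0 + y * d - (c0 + t * d)) with (d * (y - t)) in P by ring.
  rewrite Rabs_mult in P.
  assert (Rabs d * Rabs (y - t) < d1).
  { replace d1 with (Rabs d * (d1 / Rabs d)) by (field; lra). apply Rmult_lt_compat_l; auto. }
  specialize (P H0).
  replace ((g (c0 + y * d) - g (c0 + t * d)) / (y - t) - d * l) with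
    (d * ((g (c0 + y * d) - g (c0 + t * d)) / (d * (y - t)) - l)) by (field; split; lra).
  rewrite Rabs_mult. replace eps with (Rabs d * (eps / Rabs d)) by (field; lra).
  apply Rmult_lt_compat_l; auto.
Qed.

Lemma dw_cont p q g x l : deriv_within p q g x l -> forall eps, 0 < eps ->
  exists delta, 0 < delta /\ forall y, p <= y <= q -> Rabs (y - x) < delta -> Rabs (g y - g x) < eps.
Proof. intros H eps He. destruct (H 1) as [d1 [Hd1 P]]. lra.
assert (Hl : 0 < Rabs l + 1) by (pose proof (Rabs_pos l); lra).
exists (Rmin d1 (eps / (Rabs l + 1))). split. apply Rmin_pos; auto. apply Rdiv_lt_0_compat; lra.
intros y Hy Hlt. destruct (Req_dec y x). subst. replace (g x - g x) with 0 by ring. rewrite Rabs_R0; lra.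
specialize (P y Hy H0 (Rlt_le_trans _ _ _ Hlt (Rmin_l _ _))).
assert (Hlt2 : Rabs (y - x) < eps / (Rabs l + 1)) by (eapply Rlt_le_trans; [exact Hlt| apply Rmin_r]).
set (Q := (g y - g x) / (y - x)) in *.
replace (g y - g x) with (Q * (y - x)) by (unfold Q; field; lra).
rewrite Rabs_mult.
assert (Rabs Q < Rabs l + 1).
{ replace Q with ((Q - l) + l) by ring. eapply Rle_lt_trans. apply Rabs_triang. lra. }
assert (0 < Rabs (y - x)) by (apply Rabs_pos_lt; lra).
apply Rlt_trans with ((Rabs l + 1) * Rabs (y - x)). apply Rmult_lt_compat_r; auto.
replace eps with ((Rabs l + 1) * (eps / (Rabs l + 1))) by (field; lra).
apply Rmult_lt_compat_l; auto. Qed.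

Definition clamp p q y := Rmax p (Rmin q y).

Lemma clamp_in p q y : p <= q -> p <= clamp p q y <= q.
Proof. intros. unfold clamp, Rmax, Rmin. repeat destruct Rle_dec; lra. Qed.
Lemma clamp_id p q y : p <= y <= q -> clamp p q y = y.
Proof. intros. unfold clamp, Rmax, Rmin. repeat destruct Rle_dec; lra. Qed.
Lemma clamp_lip p q y z : p <= q -> Rabs (clamp p q y - clamp p q z) <= Rabs (y - z).
Proof. intros. unfold clamp, Rmax, Rmin, Rabs. repeat destruct Rle_dec; repeat destruct Rcase_abs; lra. Qed.

Lemma mono p q g g' : p < q -> (forall t, p <= t <= q -> deriv_within p q g t (g' t)) ->
  (forall t, p < t < q -> 0 <= g' t) -> g p <= g q.
Proof. intros Hpq Hd Hpos.
set (h := fun y => g (clamp p q y)).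
destruct (MVT_gen h p q (fun t => Rmax 0 (g' t))) as [c [Hc E]].
- rewrite Rmin_left, Rmax_right by lra. intros x Hx. apply is_derive_Reals.
  rewrite Rmax_right by (apply Hpos; auto).
  intros eps He. destruct (Hd x ltac:(lra) eps He) as [d [Hd0 P]].
  assert (Hm : 0 < Rmin d (Rmin (x - p) (q - x))) by (repeat apply Rmin_pos; lra).
  exists (mkposreal _ Hm). intros hh Hne Hlt. simpl in Hlt.
  assert (Rabs hh < d) by (eapply Rlt_le_trans; [exact Hlt|apply Rmin_l]).
  assert (Rabs hh < Rmin (x - p) (q - x)) by (eapply Rlt_le_trans; [exact Hlt|apply Rmin_r]).
  assert (Rabs hh < x - p) by (eapply Rlt_le_trans; [exact H0|apply Rmin_l]).
  assert (Rabs hh < q - x) by (eapply Rlt_le_trans; [exact H0|apply Rmin_r]).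
  assert (Hin : p <= x + hh <= q) by (revert H1 H2; unfold Rabs; destruct Rcase_abs; intros; lra).
  unfold h. rewrite !clamp_id by (auto; lra).
  specialize (P (x + hh) Hin). replace (x + hh - x) with hh in P by ring. apply P; auto. lra.
- intros x _. unfold continuity_pt, continue_in, limit1_in, limit_in. intros eps He.
  pose proof (clamp_in p q x ltac:(lra)) as Hcx.
  destruct (dw_cont _ _ _ _ _ (Hd _ Hcx) eps He) as [d [Hd0 P]].
  exists d. split. lra. intros y [_ Hy]. simpl in *. unfold R_dist in *. unfold h.
  apply P. apply clamp_in; lra. eapply Rle_lt_trans. apply clamp_lip; lra. auto.
- unfold h in E. rewrite !clamp_id in E by lra.
  assert (0 <= Rmax 0 (g' c)) by apply Rmax_l. nra.
Qed.

Lemma dd_nonneg k a b (D : nat -> R -> R) (x e : nat -> R) :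
  kth_derivs_on a b k D -> (forall y, a <= y <= b -> D k y >= 0) ->
  (forall i j, (1<=i)%nat -> (i<j)%nat -> (j<=S k)%nat -> x j < x i) ->
  (forall i, (1<=i<=S k)%nat -> a <= x i <= b) ->
  (forall j, (j<k)%nat -> sumR (fun i => e i * x i ^ j) (S k) = 0) ->
  0 <= e 1%nat ->
  sumR (fun i => e i * D 0%nat (x i)) (S k) >= 0.
Proof. revert D x e. induction k; intros D x e hD hDk Hdec Hin Hm He1.
- simpl. assert (D 0%nat (x 1%nat) >= 0) by (apply hDk; apply Hin; lia). nra.
- set (c0 := x (S (S k))).
  set (phi := fun t => sumR (fun i => e i * D 0%nat (c0 + t * (x i - c0))) (S (S k))).
  set (phi' := fun t => sumR (fun i => e i * ((x i - c0) * D 1%nat (c0 + t * (x i - c0)))) (S (S k))).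
  assert (Hc0 : a <= c0 <= b) by (apply Hin; lia).
  assert (H01 : phi 0 <= phi 1).
  { apply (mono 0 1 phi phi'). lra.
    - intros t Ht. unfold phi, phi'. apply dw_sum. intros i Hi. apply dw_scal.
      apply (dw_comp 0 1 a b). intros s Hs. pose proof (Hin i Hi). nra. auto.
      apply hD. lia. pose proof (Hin i Hi). nra.
    - intros t Ht. unfold phi'. change (sumR ?f (S (S k))) with (sumR f (S k) + f (S (S k))). cbv beta.
      fold c0. replace (c0 - c0) with 0 by ring.
      rewrite Rmult_0_l, Rmult_0_r, Rplus_0_r.
      apply Rge_le.
      set (y := fun i => c0 + t * (x i - c0)).
      set (e' := fun i => e i * (x i - c0)).
      rewrite (sumR_ext _ (fun i => e' i * (fun j => D (S j)) 0%nat (y i))) by (intros; unfold e', y; ring).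
      apply (IHk (fun j => D (S j)) y e').
      + intros j Hj z Hz. apply hD. lia. auto.
      + auto.
      + intros i j Hi Hij Hj. unfold y. assert (x j < x i) by (apply Hdec; lia). nra.
      + intros i Hi. unfold y. pose proof (Hin i ltac:(lia)). nra.
      + intros j Hj. set (dd := c0 - c0 / t).
        rewrite (sumR_ext _ (fun i => t ^ j * (e' i * prodR (fun _ => x i - dd) j))).
        rewrite sumR_scal. rewrite poly_moment. ring.
        intros j2 Hj2.
        transitivity (sumR (fun i => e' i * x i ^ j2) (S (S k))).
        { simpl. unfold e'. fold c0. replace (x (S (S k)) - c0) with 0 by (unfold c0; ring). ring. }
        rewrite (sumR_ext _ (fun i => e i * x i ^ (S j2) - c0 * (e i * x i ^ j2))) by (intros; unfold e'; simpl; ring).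
        rewrite sumR_minus, sumR_scal, !Hm by lia. ring.
        intros i Hi. rewrite prodR_pow. unfold y, dd. rewrite <- Rmult_assoc, (Rmult_comm (t ^ j)), Rmult_assoc.
        f_equal. rewrite <- Rpow_mult_distr. f_equal. field. lra.
      + unfold e'. assert (x (S (S k)) < x 1%nat) by (apply Hdec; lia). unfold c0. nra. }
  assert (E1 : phi 1 = sumR (fun i => e i * D 0%nat (x i)) (S (S k))).
  { unfold phi. apply sumR_ext. intros. f_equal. f_equal. ring. }
  assert (E0 : phi 0 = 0).
  { unfold phi. rewrite (sumR_ext _ (fun i => D 0%nat c0 * (e i * x i ^ 0))).
    rewrite sumR_scal, Hm by lia. ring. intros. simpl. replace (c0 + 0 * (x i - c0)) with c0 by ring. ring. }
  lra.
Qed.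

Theorem mainTheorem10
  (k n : nat) (a b : R) (pts w : nat -> R)
  (hk : (1 <= k)%nat)
  (hdec : forall i : nat, (1 <= i < n)%nat -> pts (S i) < pts i)
  (hab : forall i : nat, (1 <= i <= n)%nat -> a <= pts i <= b)
  (hmom : forall j : nat, (j < k)%nat -> sumR (fun i => w i * pts i ^ j) n = 0)
  (hpos : forall j : nat, (1 <= j <= n - k)%nat ->
     sumR (fun i => w i * prodR (fun m => pts i - pts (j + m)%nat) (k - 1)) j >= 0)
  (f : R -> R) (D : nat -> R -> R)
  (hD0 : forall x : R, a <= x <= b -> D O x = f x)
  (hD : kth_derivs_on a b k D)
  (hDk : forall x : R, a <= x <= b -> D k x >= 0) :
  sumR (fun i => w i * f (pts i)) n >= 0.
Proof.
revert pts w hdec hab hmom hpos. induction n as [|n IH]; intros pts w hdec hab hmom hpos.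
{ simpl; lra. }
pose proof (chain_dec pts (S n) hdec) as hch.
destruct (le_lt_dec (S n) k) as [Hsmall|Hbig].
{ rewrite sumR_zero. lra. intros i Hi. rewrite (vand pts w (S n) hch) by (auto; intros; apply hmom; lia). ring. }
destruct (exist_e pts k) as [e [He1 Hem]]. intros; apply hch; lia.
set (eh := fun i => if (i <=? S k)%nat then e i else 0).
set (c := w 1%nat).
assert (Hc : 0 <= c).
{ specialize (hpos 1%nat ltac:(lia)). simpl in hpos.
  assert (0 < prodR (fun m => pts 1%nat - pts (S m)) (k - 1)).
  { apply prodR_pos. intros m Hm. assert (pts (S m) < pts 1%nat) by (apply hch; lia). lra. }
  unfold c. nra. }
assert (Heh1 : eh 1%nat = 1). { unfold eh. simpl. auto. }
assert (Hehsum : forall F, sumR (fun i => eh i * F i) (S n) = sumR (fun i => e i * F i) (S k)).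
{ intros F. rewrite (sumR_extend _ (S k)); [| lia | intros i Hi; unfold eh; destruct (Nat.leb_spec i (S k)); [lia|ring]].
  apply sumR_ext. intros i Hi. unfold eh. destruct (Nat.leb_spec i (S k)); [auto|lia]. }
set (w' := fun i => w (S i) - c * eh (S i)).
set (pts' := fun i => pts (S i)).
assert (Hsplit : forall F, sumR (fun i => w i * F i) (S n) = sumR (fun i => w' i * F (S i)) n + c * sumR (fun i => eh i * F i) (S n)).
{ intros F. rewrite <- sumR_scal.
  rewrite (sumR_ext (fun i => w i * F i) (fun i => (w i - c * eh i) * F i + c * (eh i * F i))) by (intros; ring).
  rewrite sumR_plus. rewrite (sumR_shift (fun i => (w i - c * eh i) * F i)). rewrite Heh1. unfold c at 1.
  replace ((w 1%nat - w 1%nat * 1) * F 1%nat) with 0 by ring. rewrite Rplus_0_l. reflexivity. }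
assert (HIH : sumR (fun i => w' i * f (pts' i)) n >= 0).
{ apply IH.
  - intros i Hi. apply hdec; lia.
  - intros i Hi. apply hab; lia.
  - intros j Hj. pose proof (Hsplit (fun i => pts i ^ j)) as E. cbv beta in E.
    rewrite hmom in E by auto. rewrite Hehsum, Hem in E by auto. unfold pts'. lra.
  - intros j Hj. pose proof (Hsplit (fun i => prodR (fun m => pts i - pts (S j + m)%nat) (k - 1))) as E.
    cbv beta in E.
    assert (Z : sumR (fun i => eh i * prodR (fun m => pts i - pts (S j + m)%nat) (k - 1)) (S j) = 0).
    { destruct (le_lt_dec (S j) (S k)).
      - rewrite <- (sumR_extend _ (S j) (S k)); auto.
        + rewrite (sumR_ext _ (fun i => e i * prodR (fun m => pts i - pts (S j + m)%nat) (k - 1))).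
          apply poly_moment. intros; apply Hem; lia.
          intros i Hi; unfold eh; destruct (Nat.leb_spec i (S k)); [auto|lia].
        + intros i Hi. rewrite (prodR_zero _ _ (i - S j)). ring. lia.
          replace (S j + (i - S j))%nat with i by lia. ring.
      - rewrite (sumR_extend _ (S k) (S j)); [| lia | intros i Hi; unfold eh; destruct (Nat.leb_spec i (S k)); [lia|ring]].
        rewrite (sumR_ext _ (fun i => e i * prodR (fun m => pts i - pts (S j + m)%nat) (k - 1))).
        apply poly_moment. intros; apply Hem; lia.
        intros i Hi; unfold eh; destruct (Nat.leb_spec i (S k)); [auto|lia]. }
    set (G := fun i => prodR (fun m => pts i - pts (S j + m)%nat) (k - 1)).
    assert (Hs : sumR (fun i => w i * G i) (S j) = sumR (fun i => w' i * G (S i)) j + c * sumR (fun i => eh i * G i) (S j)).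
    { rewrite <- sumR_scal.
      rewrite (sumR_ext (fun i => w i * G i) (fun i => (w i - c * eh i) * G i + c * (eh i * G i))) by (intros; ring).
      rewrite sumR_plus. rewrite (sumR_shift (fun i => (w i - c * eh i) * G i)). rewrite Heh1. unfold c at 1.
      replace ((w 1%nat - w 1%nat * 1) * G 1%nat) with 0 by ring. rewrite Rplus_0_l. reflexivity. }
    unfold G in Hs. rewrite Z in Hs.
    assert (T := hpos (S j) ltac:(lia)).
    unfold pts'. change (fun i => w' i * prodR (fun m => pts (S i) - pts (S (j + m))) (k - 1)) with
      (fun i => w' i * prodR (fun m => pts (S i) - pts (S j + m)%nat) (k - 1)). lra. }
assert (HE : sumR (fun i => e i * D 0%nat (pts i)) (S k) >= 0).
{ apply (dd_nonneg k a b D pts e); auto.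
  - intros; apply hch; lia.
  - intros i Hi; apply hab; lia.
  - lra. }
rewrite Hsplit, Hehsum.
rewrite (sumR_ext (fun i => e i * f (pts i)) (fun i => e i * D 0%nat (pts i))) by (intros i Hi; rewrite hD0; auto; apply hab; lia).
unfold pts' in HIH. nra.
Qed.
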